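(* Assume that $\bar r^j\in\mathrm{recc}(C)$ for every $j\in N_0$, and that $C$ is bounded. Then $$\mathrm{conv}\Big(\Big\{x\in P^B\setminus C:\sum_{j\in N}\frac{x_j}{\alpha_j}\le1\Big\}\Big)=\Big\{x\in P^B:\sum_{j\in N}\frac{x_j}{\alpha_j}\le1\Big\},$$ $$\mathrm{conv}\Big(\Big\{x\in P^B\setminus C:\sum_{j\in N}\frac{x_j}{\beta_j}\ge1\Big\}\Big)=\Big\{x\in P^B:\sum_{j\in N}\frac{x_j}{\beta_j}\ge1\Big\}.$$
   Context: Let $A\in\mathbb{R}^{m\times n}$ have full row rank, $b\in\mathbb{R}^m$, and $P=\{x\in\mathbb{R}^n_+:Ax=b\}$. Let $C\subseteq\mathbb{R}^n$ be an open convex set. Fix a basis $B$ of $P$ with nonbasic set $N=\{1,\dots,n\}\setminus B$. Write $P=\{x:x_i=\bar b_i-\sum_{j\in N}\bar a_{ij}x_j\ (i\in B),\ x\ge0\}$ with $\bar b\ge0$. The basic solution $\bar x$ has $\bar x_i=\bar b_i$ ($i\in B$) and $0$ ($i\in N$). $P^B$ is obtained by dropping $x_i\ge0$ for $i\in B$. For $j\in N$, $\bar r^j$ has $\bar r^j_k=-\bar a_{kj}$ ($k\in B$), $\bar r^j_j=1$, and $0$ otherwise. Thus $P^B=\{\bar x+\sum_{j\in N}x_j\bar r^j:x_j\ge0\}$, and for $x\in P^B$ the $x_j$ ($j\in N$) are the coefficients in this representation. It is assumed that $\bar x\notin\mathrm{cl}(C)$. For $j\in N$, $\alpha_j=\inf\{\lambda\ge0:\bar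 x+\lambda\bar r^j\in C\}$ and $\beta_j=\sup\{\lambda\ge0:\bar x+\lambda\bar r^j\in C\}$, with $\alpha_j=+\infty$, $\beta_j=-\infty$ if the halfline misses $C$. Let $N_0=\{j\in N:\alpha_j=+\infty,\beta_j=-\infty\}$. We use the convention $t/\pm\infty=0$. For a set $K$, $\mathrm{recc}(K)=\{d:x+\lambda d\in K\ \forall x\in K,\lambda\ge0\}$. *)

(* Defs.v *)
From mathcomp Require Import all_boot all_order all_algebra.
From mathcomp Require Import all_classical all_reals all_analysis.
Set Implicit Arguments. Unset Strict Implicit. Unset Printing Implicit Defensive.
Import Order.TTheory GRing.Theory Num.Theory numFieldNormedType.Exports.
Local Open Scope classical_set_scope.
Local Open Scope ring_scope.

Section Defs.
Variables (R : realType) (m n : nat).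

Definition is_basis (A : 'M[R]_(m, n)) (B : {set 'I_n}) : Prop :=
  #|B| = m /\
  forall y : 'rV[R]_n, (forall j, j \notin B -> y ord0 j = 0) ->
    A *m y^T = 0 -> y = 0.

(* P^B : drop the constraints x_i >= 0 for i in B *)
Definition PB (A : 'M[R]_(m, n)) (b : 'cV[R]_m) (B : {set 'I_n}) : set 'rV[R]_n :=
  [set x | A *m x^T = b /\ forall j, j \notin B -> 0 <= x ord0 j].

Definition xbar (B : {set 'I_n}) (bbar : 'I_n -> R) : 'rV[R]_n :=
  \row_k (if k \in B then bbar k else 0).

Definition rbar (B : {set 'I_n}) (abar : 'I_n -> 'I_n -> R) (j : 'I_n) : 'rV[R]_n :=
  \row_k (if k \in B then - abar k j else if k == j then 1 else 0).

Definition alpha (C : set 'rV[R]_n) (x0 r : 'rV[R]_n) : \bar R :=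
  ereal_inf [set l%:E | l in [set l : R | 0 <= l /\ C (x0 + l *: r)]].

Definition beta (C : set 'rV[R]_n) (x0 r : 'rV[R]_n) : \bar R :=
  ereal_sup [set l%:E | l in [set l : R | 0 <= l /\ C (x0 + l *: r)]].

Definition recc (K : set 'rV[R]_n) : set 'rV[R]_n :=
  [set d | forall x, K x -> forall l : R, 0 <= l -> K (x + l *: d)].

Definition conv_hull (S : set 'rV[R]_n) : set 'rV[R]_n :=
  [set x | exists (k : nat) (w : 'I_k -> R) (p : 'I_k -> 'rV[R]_n),
     (forall i, 0 <= w i) /\ \sum_(i < k) w i = 1 /\
     (forall i, S (p i)) /\ x = \sum_(i < k) w i *: p i].

End Defs.

(* t / a with the convention t / (+-oo) = 0 *)
Definition ediv (R : realType) (t : R) (a : \bar R) : R :=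
  match a with EFin r => t / r | _ => 0 end.

(* Main.v *)
Require Import Defs.
From mathcomp Require Import all_boot all_order all_algebra.
From mathcomp Require Import all_classical all_reals all_analysis.
From mathcomp Require Import lra.
Import Order.TTheory GRing.Theory Num.Theory numFieldNormedType.Exports.
Local Open Scope classical_set_scope.
Local Open Scope ring_scope.

Lemma ediv_sum (R : realType) k (w t : 'I_k -> R) (a : \bar R) :
  ediv (\sum_(i < k) w i * t i) a = \sum_(i < k) w i * ediv (t i) a.
Proof.
case: a => [r||] /=; last 2 first.
- by rewrite big1 // => i _; rewrite mulr0.
- by rewrite big1 // => i _; rewrite mulr0.
by rewrite mulr_suml; apply: eq_bigr => i _; rewrite mulrA.
Qed.

Lemma sum_coord (R : realType) n k (w : 'I_k -> R) (p : 'I_k -> 'rV[R]_n) j :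
  (\sum_(i < k) w i *: p i) ord0 j = \sum_(i < k) w i * p i ord0 j.
Proof. by rewrite summxE; apply: eq_bigr => i _; rewrite mxE. Qed.

Lemma sum_PB (R : realType) m n (A : 'M[R]_(m, n)) b k (w : 'I_k -> R) (p : 'I_k -> 'rV[R]_n) :
  \sum_(i < k) w i = 1 -> (forall i, A *m (p i)^T = b) ->
  A *m (\sum_(i < k) w i *: p i)^T = b.
Proof.
move=> w1 Hp.
rewrite (linear_sum (@trmx R 1 n)) /= mulmx_sumr.
under eq_bigr => i _ do rewrite linearZ /= -scalemxAr Hp.
by rewrite -scaler_suml w1 scale1r.
Qed.

Lemma repr_x (R : realType) m n (A : 'M[R]_(m, n)) b (B : {set 'I_n}) abar bbar
  (H : forall x : 'rV[R]_n, A *m x^T = b <->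
     (forall i, i \in B ->
        x ord0 i = bbar i - \sum_(j < n | j \notin B) abar i j * x ord0 j)) x :
  A *m x^T = b ->
  x = xbar B bbar + \sum_(j < n | j \notin B) x ord0 j *: rbar B abar j.
Proof.
move=> /H Hx; apply/rowP => k; rewrite !mxE summxE.
under eq_bigr => j _ do rewrite !mxE.
case: ifP => kB.
  rewrite Hx // -sumrN; congr (_ + _); apply: eq_bigr => j _.
  by rewrite mulrN mulrC.
rewrite add0r (bigD1 k) /=; last by rewrite kB.
rewrite eqxx mulr1 big1 ?addr0 // => j /andP[_ /negPf jk].
by rewrite eq_sym jk mulr0.
Qed.

Lemma vert_coord (R : realType) n (B : {set 'I_n}) (abar : 'I_n -> 'I_n -> R) (bbar : 'I_n -> R) j (t : R) k :
  k \notin B -> (xbar B bbar + t *: rbar B abar j) ord0 k = if k == j then t else 0.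
Proof.
move=> /negPf kB; rewrite !mxE kB add0r.
by case: eqP => _; rewrite ?mulr1 ?mulr0.
Qed.

Lemma vert_PB (R : realType) m n (A : 'M[R]_(m, n)) b (B : {set 'I_n}) abar bbar
  (H : forall x : 'rV[R]_n, A *m x^T = b <->
     (forall i, i \in B ->
        x ord0 i = bbar i - \sum_(j < n | j \notin B) abar i j * x ord0 j)) j t :
  j \notin B -> A *m (xbar B bbar + t *: rbar B abar j)^T = b.
Proof.
move=> jB; apply/H => i iB.
rewrite (bigD1 j) //= big1 ?addr0; last first.
  by move=> k /andP[kB kj]; rewrite vert_coord // (negPf kj) mulr0.
by rewrite (@vert_coord _ _ _ _ _ _ _ _ jB) eqxx !mxE iB mulrN mulrC.
Qed.
Lemma open_step {R : realType} {n} {C : set 'rV[R]_n} {x0 r : 'rV[R]_n} {l : R} :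
  open C -> C (x0 + l *: r) ->
  exists2 d : R, 0 < d & forall l', `|l' - l| < d -> C (x0 + l' *: r).
Proof.
move=> oC Cl.
have : nbhs (x0 + l *: r) C by rewrite openE in oC; exact: oC.
move=> /nbhs_ballP [e e0 He].
have r1 : 0 < `|r| + 1 by rewrite ltr_wpDl.
exists (e / (`|r| + 1)); first by rewrite divr_gt0.
move=> l' hl; apply: He; rewrite -ball_normE /ball_ /=.
have -> : x0 + l *: r - (x0 + l' *: r) = (l - l') *: r.
  by rewrite scalerBl opprD addrACA subrr add0r.
rewrite normrZ distrC.
rewrite ltr_pdivlMr // in hl.
apply: le_lt_trans hl; apply: ler_wpM2l => //; by rewrite lerDl.
Qed.

Lemma notin_inf {R : realType} {n} {C : set 'rV[R]_n} {x0 r : 'rV[R]_n} :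
  open C -> ~ C x0 -> [set l : R | 0 <= l /\ C (x0 + l *: r)] !=set0 ->
  ~ C (x0 + inf [set l : R | 0 <= l /\ C (x0 + l *: r)] *: r).
Proof.
set S := [set l : R | _] => oC nC0 S0 Ca.
have lbS : has_lbound S by exists 0 => l [].
have a0 : 0 <= inf S by apply: lb_le_inf => // l [].
have [d d0 Hd] := open_step oC Ca.
have [ad|da] := leP (inf S) (d / 2).
  apply: nC0; rewrite -[x0]addr0 -[0 in X in C X](scale0r r).
  apply: Hd; rewrite sub0r normrN ger0_norm //.
  lra.
have : S (inf S - d / 2).
  split; first by rewrite subr_ge0 ltW.
  apply: Hd; rewrite (_ : inf S - d / 2 - inf S = - (d / 2)); last by lra.
  rewrite normrN gtr0_norm ?divr_gt0 //; lra.
move=> /(ge_inf lbS); lra.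
Qed.

Lemma notin_sup {R : realType} {n} {C : set 'rV[R]_n} {x0 r : 'rV[R]_n} {l : R} :
  open C -> has_ubound [set l : R | 0 <= l /\ C (x0 + l *: r)] ->
  sup [set l : R | 0 <= l /\ C (x0 + l *: r)] <= l -> 0 <= l -> ~ C (x0 + l *: r).
Proof.
set S := [set l : R | _] => oC ubS sl l0 Cl.
have [d d0 Hd] := open_step oC Cl.
have : S (l + d / 2).
  split; first by rewrite addr_ge0 // ltW // divr_gt0.
  apply: Hd; rewrite (_ : l + d / 2 - l = d / 2); last by lra.
  rewrite gtr0_norm ?divr_gt0 //; lra.
move=> /(ub_le_sup ubS) h.
have := le_trans h sl; lra.
Qed.

Lemma inf_pos {R : realType} {n} {C : set 'rV[R]_n} {x0 r : 'rV[R]_n} :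
  ~ closure C x0 -> [set l : R | 0 <= l /\ C (x0 + l *: r)] !=set0 ->
  0 < inf [set l : R | 0 <= l /\ C (x0 + l *: r)].
Proof.
set S := [set l : R | _] => ncl S0.
have [U [nU hU]] : exists U, nbhs x0 U /\ ~ (C `&` U !=set0).
  apply: contrapT => nE; apply: ncl => U nU; apply: contrapT => hne.
  by apply: nE; exists U.
move: nU => /nbhs_ballP [e e0 He].
have r1 : 0 < `|r| + 1 by rewrite ltr_wpDl.
apply: (@lt_le_trans _ _ (e / (`|r| + 1))); first by rewrite divr_gt0.
apply: lb_le_inf => // l [l0 Cl].
rewrite ler_pdivrMr //.
rewrite leNgt; apply/negP => hl; apply: hU; exists (x0 + l *: r); split => //.
apply: He; rewrite -ball_normE /ball_ /= opprD addrA subrr sub0r normrN normrZ ger0_norm //.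
apply: le_lt_trans hl; by rewrite ler_wpM2l // lerDl.
Qed.

Lemma S_ub {R : realType} {n} {C : set 'rV[R]_n} {x0 r : 'rV[R]_n} :
  bounded_set C -> r != 0 -> has_ubound [set l : R | 0 <= l /\ C (x0 + l *: r)].
Proof.
move=> BC r0; case: BC => M [_ HM].
have HC := HM (M + 1) ltac:(lra).
have rp : 0 < `|r| by rewrite normr_gt0.
exists ((M + 1 + `|x0|) / `|r|) => l [l0 Cl].
rewrite ler_pdivlMr //.
have h1 := HC _ Cl.
have : `|l *: r| <= `|x0 + l *: r| + `|x0|.
  by have := ler_normB (x0 + l *: r) x0; rewrite addrAC subrr add0r.
rewrite normrZ ger0_norm // => h2.
simpl in h1; lra.
Qed.

Lemma not_recc {R : realType} {n} {C : set 'rV[R]_n} {x1 r : 'rV[R]_n} :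
  bounded_set C -> r != 0 -> C x1 -> ~ recc C r.
Proof.
move=> BC r0 C1 rc.
have [u hu] := @S_ub _ _ _ x1 _ BC r0.
have : `|u| + 1 <= u.
  apply: hu; split; first by rewrite addr_ge0.
  by apply: rc => //; rewrite addr_ge0.
have := ler_norm u; lra.
Qed.

Lemma rbar_neq0 {R : realType} {n} (B : {set 'I_n}) (abar : 'I_n -> 'I_n -> R) j :
  j \notin B -> rbar B abar j != 0.
Proof.
move=> /negPf jB; apply/eqP => /rowP /(_ j); rewrite !mxE jB eqxx => /eqP.
by rewrite oner_eq0.
Qed.

Lemma alphaE {R : realType} {n} (C : set 'rV[R]_n) (x0 r : 'rV[R]_n) :
  [set l : R | 0 <= l /\ C (x0 + l *: r)] !=set0 ->
  alpha C x0 r = (inf [set l : R | 0 <= l /\ C (x0 + l *: r)])%:E.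
Proof. by move=> S0; rewrite /alpha ereal_inf_EFin //; exists 0 => l []. Qed.

Lemma betaE {R : realType} {n} (C : set 'rV[R]_n) (x0 r : 'rV[R]_n) :
  bounded_set C -> r != 0 ->
  [set l : R | 0 <= l /\ C (x0 + l *: r)] !=set0 ->
  beta C x0 r = (sup [set l : R | 0 <= l /\ C (x0 + l *: r)])%:E.
Proof. by move=> BC r0 S0; rewrite /beta ereal_sup_EFin //; apply: S_ub. Qed.

Lemma alpha_beta_empty {R : realType} {n} (C : set 'rV[R]_n) (x0 r : 'rV[R]_n) :
  ~ ([set l : R | 0 <= l /\ C (x0 + l *: r)] !=set0) ->
  alpha C x0 r = +oo%E /\ beta C x0 r = -oo%E.
Proof.
move=> hne; rewrite /alpha /beta.
have -> : [set l : R | 0 <= l /\ C (x0 + l *: r)] = set0.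
  by apply/seteqP; split => // l Sl; apply: hne; exists l.
by rewrite image_set0 ereal_inf0 ereal_sup0.
Qed.

Lemma ediv0 {R : realType} (a : \bar R) : ediv 0 a = 0.
Proof. by case: a => [r||] //=; rewrite mul0r. Qed.

Lemma xbar_coord {R : realType} {n} (B : {set 'I_n}) (bbar : 'I_n -> R) k :
  k \notin B -> xbar B bbar ord0 k = 0.
Proof. by move=> /negPf kB; rewrite mxE kB. Qed.

Lemma xbar_PB (R : realType) m n (A : 'M[R]_(m, n)) b (B : {set 'I_n}) abar bbar
  (H : forall x : 'rV[R]_n, A *m x^T = b <->
     (forall i, i \in B ->
        x ord0 i = bbar i - \sum_(j < n | j \notin B) abar i j * x ord0 j)) :
  A *m (xbar B bbar)^T = b.
Proof.
apply/H => i iB; rewrite big1 ?subr0; first by rewrite mxE iB.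
by move=> j jB; rewrite xbar_coord // mulr0.
Qed.

Lemma vert_sum {R : realType} {n} (B : {set 'I_n}) (abar : 'I_n -> 'I_n -> R) (bbar : 'I_n -> R) j (t : R) (a : 'I_n -> \bar R) :
  j \notin B ->
  \sum_(k < n | k \notin B) ediv ((xbar B bbar + t *: rbar B abar j) ord0 k) (a k) = ediv t (a j).
Proof.
move=> jB; rewrite (bigD1 j) //= vert_coord // eqxx big1 ?addr0 //.
by move=> k /andP[kB kj]; rewrite vert_coord // (negPf kj) ediv0.
Qed.

Lemma xbar_sum {R : realType} {n} (B : {set 'I_n}) (bbar : 'I_n -> R) (a : 'I_n -> \bar R) :
  \sum_(k < n | k \notin B) ediv (xbar B bbar ord0 k) (a k) = 0.
Proof. by rewrite big1 // => k kB; rewrite xbar_coord // ediv0. Qed.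

Lemma conv_single {R : realType} {n} (S : set 'rV[R]_n) x : S x -> conv_hull S x.
Proof.
move=> Sx; exists 1%N, (fun _ => 1), (fun _ => x); split => //.
by rewrite big_ord1; split => //; split => //; rewrite big_ord1 scale1r.
Qed.

Lemma conv_sub (R : realType) m n (A : 'M[R]_(m, n)) b (B : {set 'I_n}) (C : set 'rV[R]_n)
  (a : 'I_n -> \bar R) (Q : R -> Prop) :
  (forall k (w t : 'I_k -> R), (forall i, 0 <= w i) -> \sum_(i < k) w i = 1 ->
     (forall i, Q (t i)) -> Q (\sum_(i < k) w i * t i)) ->
  conv_hull [set x | PB A b B x /\ ~ C x /\
        Q (\sum_(j < n | j \notin B) ediv (x ord0 j) (a j))]
  `<=` [set x | PB A b B x /\ Q (\sum_(j < n | j \notin B) ediv (x ord0 j) (a j))].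
Proof.
move=> HQ x [k [w [p [w0 [w1 [Sp ->]]]]]]; split; first split.
- by apply: sum_PB => // i; have [[]] := Sp i.
- move=> j jB; rewrite sum_coord; apply: sumr_ge0 => i _.
  by apply: mulr_ge0 => //; have [[_ hp] _] := Sp i; apply: hp.
under eq_bigr => j _ do rewrite sum_coord ediv_sum.
rewrite exchange_big /=.
under eq_bigr => i _ do rewrite -mulr_sumr.
by apply: HQ => // i; have [_ []] := Sp i.
Qed.

Lemma Q_le {R : realType} k (w t : 'I_k -> R) : (forall i, 0 <= w i) -> \sum_(i < k) w i = 1 ->
     (forall i, t i <= 1) -> \sum_(i < k) w i * t i <= 1.
Proof.
move=> w0 w1 ht; rewrite -w1; apply: ler_sum => i _.
by rewrite -[X in _ <= X]mulr1 ler_wpM2l.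
Qed.

Lemma Q_ge {R : realType} k (w t : 'I_k -> R) : (forall i, 0 <= w i) -> \sum_(i < k) w i = 1 ->
     (forall i, 1 <= t i) -> 1 <= \sum_(i < k) w i * t i.
Proof.
move=> w0 w1 ht; rewrite -[X in X <= _]w1; apply: ler_sum => i _.
by rewrite -[X in X <= _]mulr1 ler_wpM2l.
Qed.
Lemma scal_aux {R : realType} {n} (a c s : R) (xb r : 'rV[R]_n) :
  c * s != 0 -> (a / (c * s)) *: (xb + (s * c) *: r) = a *: r + (a / (c * s)) *: xb.
Proof. by move=> h; rewrite scalerDr scalerA (mulrC s c) divfK // addrC. Qed.

Theorem proposition1 (R : realType) (m n : nat)
  (A : 'M[R]_(m, n)) (b : 'cV[R]_m) (C : set 'rV[R]_n)
  (B : {set 'I_n}) (abar : 'I_n -> 'I_n -> R) (bbar : 'I_n -> R) :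
  \rank A = m ->
  open C -> convex_set C ->
  is_basis A B ->
  (forall x : 'rV[R]_n, A *m x^T = b <->
     (forall i, i \in B ->
        x ord0 i = bbar i - \sum_(j < n | j \notin B) abar i j * x ord0 j)) ->
  (forall i, i \in B -> 0 <= bbar i) ->
  ~ closure C (xbar B bbar) ->
  (forall j, j \notin B ->
     alpha C (xbar B bbar) (rbar B abar j) = +oo%E ->
     beta C (xbar B bbar) (rbar B abar j) = -oo%E ->
     recc C (rbar B abar j)) ->
  bounded_set C ->
  conv_hull [set x | PB A b B x /\ ~ C x /\
        \sum_(j < n | j \notin B) ediv (x ord0 j) (alpha C (xbar B bbar) (rbar B abar j)) <= 1]
  = [set x | PB A b B x /\
        \sum_(j < n | j \notin B) ediv (x ord0 j) (alpha C (xbar B bbar) (rbar B abar j)) <= 1]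
  /\
  conv_hull [set x | PB A b B x /\ ~ C x /\
        \sum_(j < n | j \notin B) ediv (x ord0 j) (beta C (xbar B bbar) (rbar B abar j)) >= 1]
  = [set x | PB A b B x /\
        \sum_(j < n | j \notin B) ediv (x ord0 j) (beta C (xbar B bbar) (rbar B abar j)) >= 1].
Proof.
move=> rk oC cC isB H bb0 ncl hrec BC.
have nC0 : ~ C (xbar B bbar) by move=> Cx; apply: ncl; apply: subset_closure.
have Sne : forall x, C x -> forall j, j \notin B ->
    [set l : R | 0 <= l /\ C (xbar B bbar + l *: rbar B abar j)] !=set0.
  move=> x Cx j jB; apply: contrapT => hne; have [ha hb] := alpha_beta_empty _ _ _ hne.
  exact: (not_recc BC (rbar_neq0 _ _ _ jB) Cx (hrec j jB ha hb)).
pose al j := inf [set l : R | 0 <= l /\ C (xbar B bbar + l *: rbar B abar j)].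
pose be j := sup [set l : R | 0 <= l /\ C (xbar B bbar + l *: rbar B abar j)].
split; apply/seteqP; split.
- by apply: (@conv_sub _ _ _ A b B C _ (fun s => s <= 1)); exact: Q_le.
- move=> x [PBx hs]; case: (pselect (C x)) => Cx; last by apply: conv_single.
  have alE : forall j, j \notin B -> alpha C (xbar B bbar) (rbar B abar j) = (al j)%:E.
    by move=> j jB; apply: alphaE; apply: Sne Cx j jB.
  have alp : forall j, j \notin B -> 0 < al j.
    by move=> j jB; apply: inf_pos ncl (Sne x Cx j jB).
  pose s := \sum_(j < n | j \notin B) x ord0 j / al j.
  have hsE : \sum_(j < n | j \notin B) ediv (x ord0 j) (alpha C (xbar B bbar) (rbar B abar j)) = s.
    by apply: eq_bigr => j jB; rewrite alE.
  rewrite hsE in hs.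
  exists n.+1, (fun i => oapp (fun j => if j \notin B then x ord0 j / al j else 0) (1 - s) (unlift ord0 i)),
    (fun i => oapp (fun j => if j \notin B then xbar B bbar + al j *: rbar B abar j else xbar B bbar) (xbar B bbar) (unlift ord0 i)).
  split; [|split; [|split]].
  + move=> i; case: (unlift ord0 i) => [j|] /=; last by lra.
    case: ifP => jB //; apply: divr_ge0; first exact: (proj2 PBx).
    exact/ltW/alp.
  + rewrite big_ord_recl /= unlift_none /=.
    under eq_bigr => i _ do rewrite liftK /=.
    by rewrite -big_mkcond /= -/s subrK.
  + move=> i; case: (unlift ord0 i) => [j|] /=; [case: ifP => jB|].
    * split; [split|split].
      -- exact: vert_PB.
      -- by move=> k kB; rewrite vert_coord //; case: eqP => _ //; exact/ltW/alp.
      -- exact: notin_inf oC nC0 (Sne x Cx j jB).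
      -- by rewrite vert_sum // alE //= divff // gt_eqF // alp.
    * split; [split|split] => //; first exact: xbar_PB.
      -- by move=> k kB; rewrite xbar_coord.
      -- by rewrite xbar_sum.
    * split; [split|split] => //; first exact: xbar_PB.
      -- by move=> k kB; rewrite xbar_coord.
      -- by rewrite xbar_sum.
  + rewrite big_ord_recl /= unlift_none /=.
    under eq_bigr => i _ do rewrite liftK /=.
    rewrite (eq_bigr (fun j => if j \notin B then x ord0 j *: rbar B abar j + (x ord0 j / al j) *: xbar B bbar else 0)); last first.
      move=> j _; case: ifP => jB; last by rewrite scale0r.
      by rewrite scalerDr scalerA divfK ?gt_eqF ?alp // addrC.
    rewrite -big_mkcond big_split /= -scaler_suml -/s.
    apply: (etrans (@repr_x _ _ _ _ _ _ _ _ H x (proj1 PBx))).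
    by rewrite addrCA -scalerDl subrK scale1r addrC.
- by apply: (@conv_sub _ _ _ A b B C _ (fun s => 1 <= s)); exact: Q_ge.
- move=> x [PBx hs]; case: (pselect (C x)) => Cx; last by apply: conv_single.
  have beE : forall j, j \notin B -> beta C (xbar B bbar) (rbar B abar j) = (be j)%:E.
    by move=> j jB; apply: betaE => //; [exact: rbar_neq0 | exact: Sne Cx j jB].
  have bep : forall j, j \notin B -> 0 < be j.
    move=> j jB; have [l Sl] := Sne x Cx j jB.
    have := inf_pos ncl (Sne x Cx j jB).
    have := ge_inf (ex_intro _ 0 (fun l (h : _ /\ _) => proj1 h)) Sl.
    have := ub_le_sup (S_ub BC (rbar_neq0 _ _ _ jB)) Sl.
    rewrite -/(al j) -/(be j); lra.
  pose s := \sum_(j < n | j \notin B) x ord0 j / be j.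
  have hsE : \sum_(j < n | j \notin B) ediv (x ord0 j) (beta C (xbar B bbar) (rbar B abar j)) = s.
    by apply: eq_bigr => j jB; rewrite beE.
  rewrite hsE in hs.
  have s0 : 0 < s by lra.
  have [j0 j0B] : exists j0, j0 \notin B.
    apply: contrapT => hne; move: hs; rewrite /s big1; first by lra.
    by move=> j jB; exfalso; apply: hne; exists j.
  have vS : forall j, j \notin B ->
      [set x | PB A b B x /\ ~ C x /\
        1 <= \sum_(j < n | j \notin B) ediv (x ord0 j) (beta C (xbar B bbar) (rbar B abar j))]
      (xbar B bbar + (s * be j) *: rbar B abar j).
    move=> j jB; have t0 : 0 <= s * be j by rewrite mulr_ge0 // ltW // bep.
    split; [split|split].
    * exact: vert_PB.
    * by move=> k kB; rewrite vert_coord //; case: eqP.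
    * apply: notin_sup oC (S_ub BC (rbar_neq0 _ _ _ jB)) _ t0.
      by rewrite -/(be j) ler_peMl // ltW // bep.
    * by rewrite vert_sum // beE //= mulfK // gt_eqF // bep.
  have w1 : \sum_(j < n) (if j \notin B then x ord0 j / (be j * s) else 0) = 1.
    rewrite -big_mkcond /=.
    under eq_bigr => j _ do rewrite invfM mulrA.
    by rewrite -mulr_suml -/s divff // gt_eqF.
  exists n, (fun j => if j \notin B then x ord0 j / (be j * s) else 0),
    (fun j => if j \notin B then xbar B bbar + (s * be j) *: rbar B abar j
              else xbar B bbar + (s * be j0) *: rbar B abar j0).
  split; [|split; [exact: w1|split]].
  + move=> j; case: ifP => jB //; apply: divr_ge0; first exact: (proj2 PBx).
    by rewrite mulr_ge0 // ltW // bep.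
  + by move=> j; case: ifP => jB; apply: vS.
  + apply: esym.
    rewrite (eq_bigr (fun j => (if j \notin B then x ord0 j *: rbar B abar j else 0) + (if j \notin B then x ord0 j / (be j * s) else 0) *: xbar B bbar)); last first.
      move=> j _; case: ifP => jB; last by rewrite !scale0r addr0.
      by apply: scal_aux; rewrite mulf_neq0 // gt_eqF // bep.
    rewrite big_split /= -scaler_suml w1 scale1r -big_mkcond /= addrC.
    apply: esym; exact: (@repr_x _ _ _ _ _ _ _ _ H x (proj1 PBx)).
Qed.
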